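(* In the database model described in the context, assume $0<\pi_{\mathcal D}<1$ and let $\mathbf r=(r_1,\dots,r_N)$ satisfy $P(\mathbf{LR}_{\mathcal D}=\mathbf r\mid R\notin\mathcal D)>0$. Then for every subset $\mathcal D'\subseteq\{1,\dots,N\}$, \[ P(R\in\mathcal D'\mid \mathbf{LR}_{\mathcal D}=\mathbf r)=\frac{\sum_{i\in\mathcal D'}r_i\pi_i}{\pi_0+\sum_{k=1}^N r_k\pi_k}, \] and \[ \frac{P(\mathbf{LR}_{\mathcal D}=\mathbf r\mid R\in\mathcal D)}{P(\mathbf{LR}_{\mathcal D}=\mathbf r\mid R\notin\mathcal D)}=\frac{\sum_{i=1}^N r_i\pi_i}{\pi_{\mathcal D}}. \] In particular, if $\pi_i=\pi_{\mathcal D}/N$ for all $1\le i\le N$, this likelihood ratio equals $\frac1N\sum_{i=1}^N r_i$.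
   Context: Let $E$ be a countable set and let $S$, $G$ be $E$-valued random variables such that for every $e\in E$, $P(S=e)>0$ implies $P(G=e)>0$. For $e\in E$ define the likelihood ratio $LR(e)=P(S=e)/P(G=e)$ if $P(G=e)>0$ and $LR(e)=0$ otherwise. Database model: fix $N\ge1$. Let $R$ be a random variable with values in $\{0,1,\dots,N\}$; we write $R\in\mathcal D$ for $R\in\{1,\dots,N\}$ and $R\notin\mathcal D$ for $R=0$. Put $\pi_i=P(R=i)$ for $1\le i\le N$, $\pi_{\mathcal D}=\sum_{i=1}^N\pi_i$ and $\pi_0=1-\pi_{\mathcal D}=P(R=0)$. There are $E$-valued random variables $P_1,\dots,P_N$ such that conditionally on $R=i$ with $1\le i\le N$, they are independent, $P_i$ has the distribution of $S$ and $P_j$ ($j\ne i$) has the distribution of $G$; and conditionally on $R=0$ they are independent, each with the distribution of $G$. Set $\mathbf{LR}_{\mathcal D}=(LR(P_1),\dots,LR(P_N))$. *)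

(* Defs.v *)
From Stdlib Require Import Reals ClassicalEpsilon.
Open Scope R_scope.

(* E is identified with nat (any countable set injects into nat; extra points
   get probability 0).  A probability mass function on E. *)
Record is_pmf (p : nat -> R) : Prop := {
  pmf_nonneg : forall e, 0 <= p e;
  pmf_sum1 : infinite_sum p 1
}.

Definition mass (p : nat -> R) (A : nat -> Prop) : R :=
  epsilon (inhabits 0)
    (fun l => infinite_sum
       (fun e => if excluded_middle_informative (A e) then p e else 0) l).

Definition LR (pS pG : nat -> R) (e : nat) : R :=
  if Rlt_dec 0 (pG e) then pS e / pG e else 0.

Fixpoint sum1 (n : nat) (f : nat -> R) : R :=
  match n with O => 0 | S m => sum1 m f + f (S m) end.
Fixpoint prod1 (n : nat) (f : nat -> R) : R :=
  match n with O => 1 | S m => prod1 m f * f (S m) end.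

Record is_prob {Omega : Type} (Pr : (Omega -> Prop) -> R) : Prop := {
  prob_nonneg : forall A, 0 <= Pr A;
  prob_full : Pr (fun _ => True) = 1;
  prob_add : forall A B, (forall w, ~ (A w /\ B w)) ->
      Pr (fun w => A w \/ B w) = Pr A + Pr B;
  prob_ext : forall A B, (forall w, A w <-> B w) -> Pr A = Pr B
}.

Definition condP {Omega : Type} (Pr : (Omega -> Prop) -> R)
  (A B : Omega -> Prop) : R :=
  Pr (fun w => A w /\ B w) / Pr B.

(* Conditionally on R = i
   (1 <= i <= N) the P_j are independent, P_i ~ S and P_j ~ G (j <> i);
   conditionally on R = 0 they are independent, all ~ G.  Stated on all
   rectangle events {P_1 in A_1, ..., P_N in A_N}. *)
Definition database_model {Omega : Type} (Pr : (Omega -> Prop) -> R)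
  (N : nat) (pS pG : nat -> R) (Rv : Omega -> nat) (P : nat -> Omega -> nat)
  : Prop :=
  (forall w, (Rv w <= N)%nat) /\
  (forall (i : nat) (A : nat -> nat -> Prop), (i <= N)%nat ->
     Pr (fun w => Rv w = i /\ forall j, (1 <= j <= N)%nat -> A j (P j w))
     = Pr (fun w => Rv w = i) *
       prod1 N (fun j => mass (if Nat.eqb i j then pS else pG) (A j))).

Definition LR_event {Omega : Type} (N : nat) (pS pG : nat -> R)
  (P : nat -> Omega -> nat) (r : nat -> R) : Omega -> Prop :=
  fun w => forall j, (1 <= j <= N)%nat -> LR pS pG (P j w) = r j.

(* Main.v *)
Require Import Defs.
From Stdlib Require Import Reals Lra Lia ClassicalEpsilon.
Open Scope R_scope.

Lemma sum1_ext n f g : (forall i, (1 <= i <= n)%nat -> f i = g i) -> sum1 n f = sum1 n g.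
Proof. induction n; simpl; intros H; [reflexivity|].
 rewrite IHn by (intros; apply H; lia). rewrite (H (S n)) by lia. reflexivity. Qed.

Lemma sum1_scal n c f : sum1 n (fun i => c * f i) = c * sum1 n f.
Proof. induction n; simpl; [ring|]. rewrite IHn; ring. Qed.

Lemma prod1_ext n f g : (forall i, (1 <= i <= n)%nat -> f i = g i) -> prod1 n f = prod1 n g.
Proof. induction n; simpl; intros H; [reflexivity|].
 rewrite IHn by (intros; apply H; lia). rewrite (H (S n)) by lia. reflexivity. Qed.

Lemma prod1_one n F G c i : (1 <= i <= n)%nat -> (forall j, j <> i -> F j = G j) ->
  F i = c * G i -> prod1 n F = c * prod1 n G.
Proof. induction n; intros Hi HFG Hc; [lia|]. simpl.
 destruct (Nat.eq_dec i (S n)) as [->|Hne].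
 - rewrite (prod1_ext n F G) by (intros; apply HFG; lia). rewrite Hc; ring.
 - rewrite IHn by (auto; lia). rewrite HFG by auto. ring. Qed.

Lemma mass_LR pS pG c : is_pmf pS -> is_pmf pG -> (forall e, 0 < pS e -> 0 < pG e) ->
  mass pS (fun e => LR pS pG e = c) = c * mass pG (fun e => LR pS pG e = c).
Proof.
 intros HS HG Hsupp.
 set (a := fun e => if excluded_middle_informative (LR pS pG e = c) then pG e else 0).
 assert (Ha0 : forall e, 0 <= a e).
 { intro e; unfold a; destruct excluded_middle_informative; [apply HG | lra]. }
 assert (Hgr : forall f, (forall e, 0 <= f e) -> Un_growing (sum_f_R0 f)).
 { intros f Hf n; simpl; specialize (Hf (S n)); lra. }
 assert (HpG1 : forall n, sum_f_R0 pG n <= 1).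
 { apply growing_ineq; [apply Hgr, HG | apply HG]. }
 assert (Hle : forall n, sum_f_R0 a n <= sum_f_R0 pG n).
 { intro n; apply sum_Rle; intros e _; unfold a; destruct excluded_middle_informative;
   [lra | apply HG]. }
 destruct (growing_cv (sum_f_R0 a)) as [l Hl].
 { apply Hgr, Ha0. }
 { exists 1; intros x [n ->]; specialize (Hle n); specialize (HpG1 n); lra. }
 assert (Hma : mass pG (fun e => LR pS pG e = c) = l).
 { unfold mass. apply (uniqueness_sum a); [| exact Hl].
   apply (epsilon_spec (inhabits 0) (fun l0 => infinite_sum a l0)). exists l; exact Hl. }
 rewrite Hma. unfold mass.
 set (b := fun e => if excluded_middle_informative (LR pS pG e = c) then pS e else 0).
 assert (Hb : forall e, b e = a e * c).
 { intro e; unfold a, b; destruct excluded_middle_informative as [H|H]; [|ring].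
   unfold LR in H. destruct (Rlt_dec 0 (pG e)).
   - subst c; field; lra.
   - subst c. assert (pS e = 0).
     { destruct (pmf_nonneg _ HS e) as [Hp|Hp]; [ exfalso; apply n, Hsupp, Hp | lra]. }
     rewrite H; ring. }
 assert (Hbl : infinite_sum b (c * l)).
 { intros eps Heps. destruct (Req_dec c 0) as [Hc|Hc].
   - exists 0%nat; intros n _. unfold R_dist.
     rewrite (sum_eq b (fun i => a i * c)) by auto. rewrite <- scal_sum, Hc.
     rewrite Rminus_diag_eq by ring. rewrite Rabs_R0; lra.
   - destruct (Hl (eps / Rabs c)) as [M HM].
     { apply Rdiv_lt_0_compat; [lra | apply Rabs_pos_lt; auto]. }
     exists M; intros n Hn. specialize (HM n Hn). unfold R_dist in *.
     rewrite (sum_eq b (fun i => a i * c)) by auto. rewrite <- scal_sum.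
     replace (c * sum_f_R0 a n - c * l) with (c * (sum_f_R0 a n - l)) by ring.
     rewrite Rabs_mult.
     assert (0 < Rabs c) by (apply Rabs_pos_lt; auto).
     apply (Rmult_lt_compat_l (Rabs c)) in HM; [|lra].
     replace (Rabs c * (eps / Rabs c)) with eps in HM by (field; lra). exact HM. }
 apply (uniqueness_sum b); [| exact Hbl].
 apply (epsilon_spec (inhabits 0) (fun l0 => infinite_sum b l0)). exists (c*l); exact Hbl.
Qed.

Lemma decomp {Omega : Type} (Pr : (Omega -> Prop) -> R) (Rv : Omega -> nat) (F : Omega -> Prop) n :
  is_prob Pr ->
  Pr (fun w => F w /\ (Rv w <= n)%nat) =
  Pr (fun w => F w /\ Rv w = 0%nat) + sum1 n (fun i => Pr (fun w => F w /\ Rv w = i)).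
Proof.
 intros HP. induction n; simpl.
 - rewrite Rplus_0_r. apply (prob_ext _ HP). intro w; split; intros [? ?]; split; auto; lia.
 - rewrite <- Rplus_assoc, <- IHn, <- (prob_add _ HP).
   + apply (prob_ext _ HP). intro w; split.
     * intros [HF Hr]. destruct (Nat.eq_dec (Rv w) (S n)); [right|left]; split; auto; lia.
     * intros [[? ?]|[? ?]]; split; auto; lia.
   + intros w [[_ ?] [_ ?]]; lia.
Qed.
Theorem mainTheorem3
  (Omega : Type) (Pr : (Omega -> Prop) -> R) (N : nat)
  (pS pG : nat -> R) (Rv : Omega -> nat) (P : nat -> Omega -> nat)
  (r : nat -> R)
  (HN : (1 <= N)%nat)
  (HPr : is_prob Pr)
  (HS : is_pmf pS) (HG : is_pmf pG)
  (Hsupp : forall e, 0 < pS e -> 0 < pG e)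
  (Hmodel : database_model Pr N pS pG Rv P) :
  let pi := fun i => Pr (fun w => Rv w = i) in
  let piD := sum1 N pi in
  let pi0 := 1 - piD in
  0 < piD < 1 ->
  condP Pr (LR_event N pS pG P r) (fun w => Rv w = 0%nat) > 0 ->
  (forall D' : nat -> bool, (forall i, D' i = true -> (1 <= i <= N)%nat) ->
     condP Pr (fun w => D' (Rv w) = true) (LR_event N pS pG P r)
     = sum1 N (fun i => if D' i then r i * pi i else 0)
       / (pi0 + sum1 N (fun k => r k * pi k)))
  /\
  condP Pr (LR_event N pS pG P r) (fun w => (1 <= Rv w)%nat)
    / condP Pr (LR_event N pS pG P r) (fun w => Rv w = 0%nat)
    = sum1 N (fun i => r i * pi i) / piD
  /\
  ((forall i, (1 <= i <= N)%nat -> pi i = piD / INR N) ->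
   condP Pr (LR_event N pS pG P r) (fun w => (1 <= Rv w)%nat)
    / condP Pr (LR_event N pS pG P r) (fun w => Rv w = 0%nat)
    = / INR N * sum1 N r).
Proof.

  intros pi piD pi0 HpiD Hcond.
  destruct Hmodel as [Hbd Hm].
  assert (Hempty : forall A, (forall w, ~ A w) -> Pr A = 0).
  { intros A HA. assert (E := prob_add _ HPr A A (fun w H => HA w (proj1 H))).
    rewrite (prob_ext _ HPr (fun w => A w \/ A w) A) in E by (intro w; tauto). lra. }
  set (L := LR_event N pS pG P r).
  set (g := fun j => mass pG (fun e => LR pS pG e = r j)).
  set (q := prod1 N g).
  assert (HkeyI : forall i, (1 <= i <= N)%nat -> Pr (fun w => L w /\ Rv w = i) = pi i * (r i * q)).
  { intros i Hi.
    assert (E := Hm i (fun j e => LR pS pG e = r j) (proj2 Hi)). cbv beta in E.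
    change (Pr (fun w => Rv w = i)) with (pi i) in E.
    rewrite (prod1_one N _ g (r i) i Hi) in E.
    - fold q in E. rewrite <- E. apply (prob_ext _ HPr). intro w; unfold L, LR_event; tauto.
    - intros j Hj. apply not_eq_sym, Nat.eqb_neq in Hj. rewrite Hj. reflexivity.
    - rewrite Nat.eqb_refl. apply mass_LR; auto. }
  assert (Hkey0 : Pr (fun w => L w /\ Rv w = 0%nat) = pi 0%nat * q).
  { assert (E := Hm 0%nat (fun j e => LR pS pG e = r j) (Nat.le_0_l _)). cbv beta in E.
    change (Pr (fun w => Rv w = 0%nat)) with (pi 0%nat) in E.
    rewrite (prod1_ext N _ g) in E.
    - fold q in E. rewrite <- E. apply (prob_ext _ HPr). intro w; unfold L, LR_event; tauto.
    - intros [|j] Hj; [lia|reflexivity]. }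
  assert (Hpi0 : pi 0%nat = pi0).
  { assert (E := decomp Pr Rv (fun _ => True) N HPr).
    rewrite (prob_ext _ HPr _ (fun _ => True)), (prob_full _ HPr) in E
      by (intro w; split; auto).
    rewrite (sum1_ext N _ pi) in E.
    - change (Pr (fun w => True /\ Rv w = 0%nat)) with (Pr (fun w => True /\ Rv w = 0%nat)) in E.
      rewrite (prob_ext _ HPr (fun w => True /\ Rv w = 0%nat) (fun w => Rv w = 0%nat)) in E
        by (intro; tauto).
      unfold pi0, piD. change (Pr (fun w => Rv w = 0%nat)) with (pi 0%nat) in E. lra.
    - intros i _. apply (prob_ext _ HPr); intro; tauto. }
  assert (Hpi0pos : 0 < pi 0%nat) by (rewrite Hpi0; unfold pi0; lra).
  assert (Hq : 0 < q).
  { unfold condP in Hcond. fold L in Hcond. rewrite Hkey0 in Hcond.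
    change (Pr (fun w => Rv w = 0%nat)) with (pi 0%nat) in Hcond.
    replace (pi 0%nat * q / pi 0%nat) with q in Hcond by (field; lra). lra. }
  assert (HPrL : Pr L = q * (pi0 + sum1 N (fun k => r k * pi k))).
  { assert (E := decomp Pr Rv L N HPr).
    rewrite (prob_ext _ HPr _ L) in E by (intro w; split; [tauto| split; auto]).
    rewrite E, Hkey0, Hpi0, (sum1_ext N _ (fun i => q * (r i * pi i))).
    - rewrite sum1_scal; ring.
    - intros i Hi. rewrite HkeyI by auto. ring. }
  assert (Hsplit : forall X Y, q * X / (q * Y) = X / Y).
  { intros X Y. unfold Rdiv. rewrite Rinv_mult.
    replace (q * X * (/ q * / Y)) with ((q * / q) * (X * / Y)) by ring.
    rewrite Rinv_r by lra. ring. }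
  assert (Part2 : condP Pr L (fun w => (1 <= Rv w)%nat) / condP Pr L (fun w => Rv w = 0%nat)
                  = sum1 N (fun i => r i * pi i) / piD).
  { unfold condP. rewrite Hkey0.
    change (Pr (fun w => Rv w = 0%nat)) with (pi 0%nat).
    assert (E1 := decomp Pr Rv (fun w => (1 <= Rv w)%nat) N HPr).
    rewrite (prob_ext _ HPr _ (fun w => (1 <= Rv w)%nat)) in E1
      by (intro w; split; [tauto | split; auto]).
    rewrite (Hempty (fun w => (1 <= Rv w)%nat /\ Rv w = 0%nat)) in E1 by (intros w [? ?]; lia).
    rewrite (sum1_ext N _ pi) in E1.
    2:{ intros i Hi. apply (prob_ext _ HPr). intro w; split; [tauto|]. intro H; split; auto; lia. }
    assert (E2 := decomp Pr Rv (fun w => L w /\ (1 <= Rv w)%nat) N HPr).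
    rewrite (prob_ext _ HPr _ (fun w => L w /\ (1 <= Rv w)%nat)) in E2
      by (intro w; split; [tauto | split; auto]).
    rewrite (Hempty (fun w => (L w /\ (1 <= Rv w)%nat) /\ Rv w = 0%nat)) in E2 by (intros w [[? ?] ?]; lia).
    rewrite (sum1_ext N _ (fun i => q * (r i * pi i))) in E2.
    2:{ intros i Hi. replace (q * (r i * pi i)) with (pi i * (r i * q)) by ring.
        rewrite <- (HkeyI i Hi).
        rewrite (prob_ext _ HPr _ (fun w => L w /\ Rv w = i)). reflexivity.
        intro w; split; [tauto|]. intros [? ?]; repeat split; auto; lia. }
    rewrite E1, E2, sum1_scal, Rplus_0_l, Rplus_0_l. fold piD.
    assert (piD <> 0) by lra. field. split; lra. }
  split; [| split].
  - intros D' HD'. unfold condP.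
    assert (E := decomp Pr Rv (fun w => D' (Rv w) = true /\ L w) N HPr).
    rewrite (prob_ext _ HPr _ (fun w => D' (Rv w) = true /\ L w)) in E
      by (intro w; split; [tauto | split; auto]).
    rewrite E, (Hempty (fun w => (D' (Rv w) = true /\ L w) /\ Rv w = 0%nat)).
    2:{ intros w [[H1 _] H2]. rewrite H2 in H1. apply HD' in H1. lia. }
    rewrite (sum1_ext N _ (fun i => q * (if D' i then r i * pi i else 0))).
    2:{ intros i Hi. destruct (D' i) eqn:Hd.
        - replace (q * (r i * pi i)) with (pi i * (r i * q)) by ring.
          rewrite <- (HkeyI i Hi).
          apply (prob_ext _ HPr). intro w; split; [tauto|].
          intros [HL Hr]; rewrite Hr; auto.
        - rewrite Rmult_0_r. apply Hempty. intros w [[H1 _] H2]. rewrite H2 in H1. congruence. }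
    rewrite sum1_scal, Rplus_0_l, HPrL. apply Hsplit.
  - exact Part2.
  - intros Hu. rewrite Part2.
    rewrite (sum1_ext N _ (fun i => piD / INR N * r i)).
    2:{ intros i Hi; rewrite Hu by auto; ring. }
    rewrite sum1_scal.
    assert (0 < INR N) by (apply lt_0_INR; lia).
    field. split; lra.
Qed.
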